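(* Let $G$ be a finite weakly minmax group and let $N$ be a normal subgroup of $G$ which is an intersection of maximal subgroups of $G$. Then $G/N$ is weakly minmax.
   Context: A subgroup of $G$ is a maximal intersection if it is an intersection of finitely many (at least one) maximal subgroups of $G$; $\mathcal M(G)$ is the poset under inclusion consisting of $G$ and all maximal intersections in $G$. An unrefinable chain in $\mathcal M(G)$ is a chain $K_t<\dots<K_0$ of elements of $\mathcal M(G)$ to which no further element of $\mathcal M(G)$ can be added; its length is $t$. $\mathrm{MinInt}(G)$ and $\mathrm{MaxInt}(G)$ are the minimal and maximal lengths of unrefinable chains in $\mathcal M(G)$. $\alpha(G)$ is the smallest cardinality of a family of maximal subgroups of $G$ whose intersection equals the Frattini subgroup $\Phi(G)$. $G$ is weakly minmax if $\mathrm{MinInt}(G)=\mathrm{MaxInt}(G)=\alpha(G)$. *)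

(* Defs.v *)
From mathcomp Require Import all_boot all_fingroup all_solvable.
Set Implicit Arguments. Unset Strict Implicit. Unset Printing Implicit Defensive.
Local Open Scope group_scope.

Section MaxInt.
Variable gT : finGroupType.
Implicit Types A H : {set gT}.

Definition maxint A H : bool :=
  [exists S : {set {set gT}},
     [&& S != set0, [forall M in S, maximal M A] & H == \bigcap_(M in S) M]].

Definition Mposet A : {set {set gT}} := [set H | (H == A) || maxint A H].

Definition Mchain A (C : {set {set gT}}) : bool :=
  (C \subset Mposet A) &&
  [forall H in C, forall K in C, (H \subset K) || (K \subset H)].

Definition unrefinable A (C : {set {set gT}}) : bool :=
  Mchain A C &&
  [forall H in Mposet A,
     [forall K in C, (H \subset K) || (K \subset H)] ==> (H \in C)].

Definition chain_length (C : {set {set gT}}) : nat := (#|C|).-1.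

(* Min/max lengths of unrefinable chains (there is always at least one
   unrefinable chain, and every length is < #|{set gT}|). *)
Definition MinInt A : nat :=
  \big[minn/#|{set gT}|]_(C : {set {set gT}} | unrefinable A C) chain_length C.
Definition MaxInt A : nat :=
  \max_(C : {set {set gT}} | unrefinable A C) chain_length C.

(* alpha(A): smallest size of a family of maximal subgroups of A whose
   intersection is the Frattini subgroup (the empty family intersects to A). *)
Definition alpha A : nat :=
  \big[minn/#|{set {set gT}}|]_(S : {set {set gT}} |
      [forall M in S, maximal M A] && (A :&: \bigcap_(M in S) M == 'Phi(A)))
    #|S|.

Definition weakly_minmax A : Prop :=
  MinInt A = alpha A /\ MaxInt A = alpha A.

End MaxInt.

(* Main.v *)
Require Import Defs.
From mathcomp Require Import all_boot all_fingroup all_solvable.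
From mathcomp Require Import zify.
Set Implicit Arguments. Unset Strict Implicit. Unset Printing Implicit Defensive.
Local Open Scope group_scope.

Lemma arith1 a c d : c < d -> a <= c.-1 -> 0 < c -> a.+1 <= d.-1.
Proof. lia. Qed.

Section Gen.
Variable gT : finGroupType.
Implicit Types (A : {group gT}) (M H X Y : {set gT}).

Lemma max_group M (B : {set gT}) : maximal M B -> group_set M.
Proof. by case/maxsetP => /andP[]. Qed.

Lemma max_sub A M : maximal M A -> M \subset A.
Proof.
move=> mM; have gM := max_group mM.
exact: proper_sub (maxgroupp (G := Group gM) mM).
Qed.

Lemma Phi_sub_maxS A M : maximal M A -> 'Phi(A) \subset M.
Proof. move=> mM; have gM := max_group mM; exact: (Phi_sub_max (M := Group gM) mM). Qed.

Lemma PhiE A : A :&: \bigcap_(M in [set M | maximal M A]) M = 'Phi(A).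
Proof.
apply/eqP; rewrite eqEsubset; apply/andP; split.
  apply/bigcapsP => H /orP [/eqP->|mH]; first exact: subsetIl.
  by apply: subset_trans (subsetIr _ _) (bigcap_inf _ _); rewrite inE.
rewrite subsetI Phi_sub; apply/bigcapsP => M; rewrite inE; exact: Phi_sub_maxS.
Qed.

Lemma Mposet_sub A X : X \in Mposet A -> X \subset A.
Proof.
rewrite inE => /orP [/eqP->//|/existsP [S /and3P [S0 /forall_inP mS /eqP->]]].
case/set0Pn: S0 => M MS; apply: subset_trans (bigcap_inf _ MS) (max_sub (mS _ MS)).
Qed.

Lemma Mposet_Phi A X : X \in Mposet A -> 'Phi(A) \subset X.
Proof.
rewrite inE => /orP [/eqP->|/existsP [S /and3P [S0 /forall_inP mS /eqP->]]].
  exact: Phi_sub.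
apply/bigcapsP => M MS; exact: Phi_sub_maxS (mS _ MS).
Qed.

Lemma Phi_Mposet A : 'Phi(A) \in Mposet A.
Proof.
rewrite inE; have [S0|nS0] := eqVneq [set M | maximal M A] set0.
  by rewrite -(PhiE A) S0 big_set0 setIT eqxx.
apply/orP; right; apply/existsP; exists [set M | maximal M A].
rewrite nS0 /=; apply/andP; split; first by apply/forall_inP => M; rewrite inE.
rewrite -(PhiE A); apply/eqP/setIidPr.
case/set0Pn: nS0 => M MS; apply: subset_trans (bigcap_inf _ MS) _.
by apply: max_sub; rewrite inE in MS.
Qed.

Lemma Mposet_meet A Y M : Y \in Mposet A -> maximal M A -> Y :&: M \in Mposet A.
Proof.
move=> YM mM; rewrite inE; apply/orP; right.
move: YM; rewrite inE => /orP [/eqP->|/existsP [S /and3P [S0 /forall_inP mS /eqP->]]].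
  apply/existsP; exists [set M]; rewrite big_set1.
  have -> : [set M] != set0 by apply/set0Pn; exists M; rewrite inE.
  rewrite /=; apply/andP; split; first by apply/forall_inP => K; rewrite inE => /eqP->.
  by apply/eqP/setIidPr/max_sub.
apply/existsP; exists (M |: S).
have -> : M |: S != set0 by apply/set0Pn; exists M; rewrite !inE eqxx.
rewrite /=; apply/andP; split.
  by apply/forall_inP => K; rewrite !inE => /orP [/eqP->//|]; apply: mS.
by rewrite bigcap_setU big_set1 setIC.
Qed.

Lemma unref_in A C H : unrefinable A C -> H \in Mposet A ->
  (forall K, K \in C -> (H \subset K) || (K \subset H)) -> H \in C.
Proof.
case/andP => _ /forall_inP hU HM hc; apply: (implyP (hU H HM)).
by apply/forall_inP.
Qed.

Lemma unref_sub A C : unrefinable A C -> C \subset Mposet A.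
Proof. by case/andP => /andP[]. Qed.

Lemma unref_chain A C H K : unrefinable A C -> H \in C -> K \in C ->
  (H \subset K) || (K \subset H).
Proof.
case/andP => /andP[_ /forall_inP h] _ HC KC; exact: (forall_inP (h _ HC) _ KC).
Qed.

Lemma unref_Phi A C : unrefinable A C -> 'Phi(A) \in C.
Proof.
move=> uC; apply: (unref_in uC (Phi_Mposet A)) => K KC.
by rewrite Mposet_Phi // (subsetP (unref_sub uC)).
Qed.

Lemma unref_top A C : unrefinable A C -> gval A \in C.
Proof.
move=> uC; apply: (unref_in uC _) => [|K KC]; first by rewrite inE eqxx.
by rewrite Mposet_sub ?orbT // (subsetP (unref_sub uC)).
Qed.

Lemma chain_family A C : unrefinable A C -> forall Y, Y \in C ->
  exists L : {set {set gT}}, [/\ [forall M in L, maximal M A],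
     Y :&: \bigcap_(M in L) M = 'Phi(A) &
     #|L| <= #|[set X in C | X \subset Y]|.-1].
Proof.
move=> uC.
suff: forall n Y, #|[set X in C | X \subset Y]| < n -> Y \in C ->
  exists L : {set {set gT}}, [/\ [forall M in L, maximal M A],
     Y :&: \bigcap_(M in L) M = 'Phi(A) &
     #|L| <= #|[set X in C | X \subset Y]|.-1].
  by move=> h Y; apply: h.
elim=> // n IH Y cY YC.
have YM := subsetP (unref_sub uC) _ YC.
have [YP|nYP] := eqVneq Y 'Phi(A).
  exists set0; rewrite big_set0 setIT YP cards0; split=> //.
  by apply/forall_inP => M; rewrite inE.
have PY : 'Phi(A) \proper Y by rewrite properEneq eq_sym nYP Mposet_Phi.
pose D := [set X in C | X \proper Y].
have PD : 'Phi(A) \in D by rewrite inE unref_Phi.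
case: (@arg_maxnP _ 'Phi(A) (mem D) (fun X => #|X|) PD).
move=> Z ZD Zmax; have : Z \in D := ZD; rewrite inE => /andP [ZC ZY].
have ZM := subsetP (unref_sub uC) _ ZC.
have : Z \in Mposet A := ZM.
rewrite inE => /orP [/eqP ZA|].
  by have := proper_sub_trans ZY (Mposet_sub YM); rewrite ZA properE subxx andbF.
case/existsP => T /and3P [T0 /forall_inP mT /eqP Zdef].
have [M MT YnM] : exists2 M, M \in T & ~~ (Y \subset M).
  apply/forall_inPn; apply/negP => /forall_inP h.
  have : Y \subset Z by rewrite Zdef; apply/bigcapsP.
  by rewrite properE in ZY; case/andP: ZY => _ /negP.
have mM := mT _ MT.
have ZW : Z \subset Y :&: M.
  by rewrite subsetI (proper_sub ZY) Zdef bigcap_inf.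
have WC : Y :&: M \in C.
  apply: (unref_in uC (Mposet_meet YM mM)) => K KC.
  case/orP: (unref_chain uC YC KC) => [YK|KY].
    by rewrite (subset_trans (subsetIl _ _) YK).
  have [KeY|KnY] := eqVneq K Y; first by rewrite KeY subsetIl.
  have KD : K \in D by rewrite inE KC properEneq KnY KY.
  have cK := Zmax _ KD.
  case/orP: (unref_chain uC ZC KC) => [ZK|KZ].
    have : Z == K by rewrite eqEcard ZK; exact: cK.
    by move/eqP=> <-; rewrite ZW orbT.
  by rewrite (subset_trans KZ ZW) orbT.
have WY : Y :&: M \proper Y.
  rewrite properEneq subsetIl andbT; apply: contra YnM => /eqP e.
  by rewrite -e subsetIr.
have WD : Y :&: M \in D by rewrite inE WC WY.
have WZ : Y :&: M = Z.
  by apply/eqP; rewrite eq_sym eqEcard ZW; exact: Zmax.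
have sZY : [set X in C | X \subset Z] \proper [set X in C | X \subset Y].
  apply/properP; split.
    apply/subsetP => X; rewrite !inE => /andP [-> XZ] /=.
    exact: subset_trans XZ (proper_sub ZY).
  exists Y; first by rewrite inE YC subxx.
  by rewrite inE YC /=; rewrite properE in ZY; case/andP: ZY.
have cZ := proper_card sZY.
have [L [mL eL cL]] := IH Z (leq_trans cZ cY) ZC.
exists (M |: L); split.
  by apply/forall_inP => K; rewrite !inE => /orP [/eqP->//|]; apply: (forall_inP mL).
  by rewrite bigcap_setU big_set1 setIA WZ.
have ZZ : Z \in [set X in C | X \subset Z] by rewrite inE ZC subxx.
have c1 : 0 < #|[set X in C | X \subset Z]| by apply/card_gt0P; exists Z.
rewrite cardsU1; move: cZ cL c1; move: (M \notin L) => b.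
move: #|L| #|[set X in C | X \subset Z]| #|[set X in C | X \subset Y]| => a c d.
case: b => /= h1 h2 h3; have := arith1 h1 h2 h3; rewrite ?add1n ?add0n //.
exact: ltnW.
Qed.

End Gen.

Lemma bigminn_le_seq (I : eqType) (r : seq I) (P : pred I) (F : I -> nat) d j :
  j \in r -> P j -> \big[minn/d]_(i <- r | P i) F i <= F j.
Proof.
elim: r => // i r IH; rewrite inE big_cons => /orP [/eqP<- ->|jr Pj].
  exact: geq_minl.
case: (P i); last exact: IH.
exact: leq_trans (geq_minr _ _) (IH jr Pj).
Qed.

Lemma bigminn_le (I : finType) (P : pred I) (F : I -> nat) d j :
  P j -> \big[minn/d]_(i | P i) F i <= F j.
Proof. by move=> Pj; apply: bigminn_le_seq => //; exact: mem_index_enum. Qed.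

Lemma bigminn_attain (I : finType) (P : pred I) (F : I -> nat) d j0 :
  P j0 -> (forall i, P i -> F i <= d) ->
  exists2 j, P j & \big[minn/d]_(i | P i) F i = F j.
Proof.
move=> Pj0 hd; case: (@arg_minnP _ j0 P F Pj0) => j Pj jmin.
exists j => //; apply/eqP; rewrite eqn_leq bigminn_le //=.
apply: (big_ind (fun x => F j <= x)).
- exact: hd.
- by move=> x y hx hy; rewrite leq_min hx hy.
- exact: jmin.
Qed.

Lemma bigminn_const (I : finType) (P : pred I) (F : I -> nat) d a j0 :
  P j0 -> (forall i, P i -> F i = a) -> a <= d ->
  \big[minn/d]_(i | P i) F i = a.
Proof.
move=> Pj0 hF ad; apply/eqP; rewrite eqn_leq; apply/andP; split.
  by rewrite -(hF j0 Pj0) bigminn_le.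
apply: (big_ind (fun x => a <= x)) => //; first by move=> x y hx hy; rewrite leq_min hx hy.
by move=> i Pi; rewrite hF.
Qed.

Lemma bigmax_const (I : finType) (P : pred I) (F : I -> nat) a j0 :
  P j0 -> (forall i, P i -> F i = a) -> \max_(i | P i) F i = a.
Proof.
move=> Pj0 hF; apply/eqP; rewrite eqn_leq; apply/andP; split.
  by apply/bigmax_leqP => i Pi; rewrite hF.
by rewrite -(hF j0 Pj0) (leq_bigmax_cond _ Pj0).
Qed.

Section Gen2.
Variable gT : finGroupType.

Lemma maxset_unref (A : {group gT}) E : maxset (Mchain A) E -> unrefinable A E.
Proof.
case/maxsetP => chE maxE; rewrite /unrefinable chE /=.
apply/forall_inP => H HM; apply/implyP => /forall_inP hc.
have chHE : Mchain A (H |: E).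
  case/andP: chE => sE /forall_inP chE.
  rewrite /Mchain subUset sub1set HM sE /=.
  apply/forall_inP => X; rewrite !inE => /orP [/eqP->|XE];
  apply/forall_inP => K; rewrite !inE => /orP [/eqP->|KE].
  - by rewrite subxx.
  - exact: hc.
  - by rewrite orbC hc.
  - exact: (forall_inP (chE _ XE)).
by rewrite -(maxE _ chHE (subsetUr _ _)) setU11.
Qed.

Lemma unref_exists (A : {group gT}) : exists C, unrefinable A C.
Proof.
have ch0 : Mchain A set0.
  by rewrite /Mchain sub0set; apply/forall_inP => H; rewrite inE.
have [E mE _] := maxset_exists ch0; exists E; exact: maxset_unref.
Qed.

Lemma alpha_attain (A : {group gT}) : exists2 S : {set {set gT}},
  [forall M in S, maximal M A] && (A :&: \bigcap_(M in S) M == 'Phi(A)) &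
  alpha A = #|S|.
Proof.
rewrite /alpha; apply: (bigminn_attain (j0 := [set M | maximal M A])).
  rewrite PhiE eqxx andbT; by apply/forall_inP => M; rewrite inE.
move=> S _; apply: leq_trans (max_card _) _.
apply: leq_trans _ (max_card (mem (powerset [set: {set gT}]))).
rewrite card_powerset cardsT; exact: ltnW (ltn_expl _ (isT : 1 < 2)).
Qed.

Lemma alpha_le (A : {group gT}) C : unrefinable A C -> alpha A <= chain_length C.
Proof.
move=> uC; have [L [mL eL cL]] := chain_family uC (unref_top uC).
have e : [set X in C | X \subset A] = C.
  apply/setP => X; rewrite inE; case XC: (X \in C) => //=.
  by rewrite Mposet_sub // (subsetP (unref_sub uC)).
rewrite e in cL; apply: leq_trans cL; apply: bigminn_le; by rewrite mL eL eqxx.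
Qed.

End Gen2.

Lemma arith2 c e l s m u i s' aG v j :
  e.-1 <= aG -> aG <= u -> u + i = s' + m -> s' <= s -> m <= l.-1 ->
  v + j = c + l -> j <= 1 -> v <= e -> 0 < l -> c.-1 <= s.
Proof. lia. Qed.

Section Quo.
Variables (gT : finGroupType) (G N : {group gT}).
Hypothesis nNG : N <| G.

Lemma pre_inj : injective (fun X : {set coset_of N} => coset N @*^-1 X).
Proof. by move=> X Y /= e; rewrite -(cosetpreK X) e cosetpreK. Qed.

Lemma pre_maximal M : maximal M (G / N) -> maximal (coset N @*^-1 M) G.
Proof.
move=> mM; have gM := max_group mM.
have := @cosetpre_maximal _ N (Group gM) (G / N)%G.
by rewrite /= quotientGK // => ->.
Qed.

Lemma quo_maximal M : maximal M G -> N \subset M -> maximal (M / N) (G / N).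
Proof.
move=> mM sNM; have gM := max_group mM.
have nNM : N <| Group gM by apply: normalS nNG => //; exact: max_sub mM.
by have := @quotient_maximal _ N (Group gM) G nNM nNG => /= ->.
Qed.

Lemma prePhi : maxint G N -> coset N @*^-1 'Phi(G / N) = N.
Proof.
case/existsP => T /and3P [_ /forall_inP mT /eqP Ndef].
apply/eqP; rewrite eqEsubset sub_cosetpre andbT.
apply: (@subset_trans _ _ (\bigcap_(M in T) M)); last by rewrite Ndef.
apply/bigcapsP => M MT.
have sNM : N \subset M by rewrite Ndef bigcap_inf.
have mM := mT _ MT; have gM := max_group mM.
have sMG := max_sub mM.
apply: subset_trans (morphpreS _ (Phi_sub_maxS (quo_maximal mM sNM))) _.
rewrite (quotientK (A := M)); first exact: (mul_subG (G := Group gM) sNM (subxx _)).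
exact: subset_trans sMG (normal_norm nNG).
Qed.

Lemma pre_bigcap (S : {set {set coset_of N}}) : S != set0 ->
  coset N @*^-1 (\bigcap_(M in S) M) = \bigcap_(M in S) coset N @*^-1 M.
Proof.
move=> S0; apply/setP => x; apply/idP/idP.
  case/morphpreP => xN /bigcapP h; apply/bigcapP => M MS.
  by apply/morphpreP; split => //; exact: h.
move/bigcapP => h; case/set0Pn: S0 => M0 M0S.
have /morphpreP [xN _] := h _ M0S.
apply/morphpreP; split => //; apply/bigcapP => M MS.
by have /morphpreP [_] := h _ MS.
Qed.

Lemma pre_Mposet X : X \in Mposet (G / N) -> coset N @*^-1 X \in Mposet G.
Proof.
rewrite !inE => /orP [/eqP->|/existsP [S /and3P [S0 /forall_inP mS /eqP->]]].
  by rewrite quotientGK // eqxx.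
apply/orP; right; apply/existsP; exists ((fun X => coset N @*^-1 X) @: S).
rewrite imset_eq0 S0 /=; apply/andP; split.
  by apply/forall_inP => M /imsetP [K KS ->]; apply: pre_maximal; exact: mS.
by rewrite big_imset /=; [rewrite pre_bigcap | move=> ? ? _ _; exact: pre_inj].
Qed.

Lemma preGcap (S0 : {set {set coset_of N}}) :
  G :&: \bigcap_(M in S0) coset N @*^-1 M =
  coset N @*^-1 ((G / N) :&: \bigcap_(M in S0) M).
Proof.
have nG : G \subset 'N(N) := normal_norm nNG.
apply/setP => x; apply/idP/idP.
  case/setIP => xG /bigcapP h; apply/morphpreP; split; first exact: subsetP nG x xG.
  rewrite inE mem_quotient //=; apply/bigcapP => M MS.
  by have /morphpreP [_] := h _ MS.
case/morphpreP => xN; rewrite inE => /andP [xQ /bigcapP h].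
rewrite inE; apply/andP; split.
  by rewrite -(quotientGK nNG); apply/morphpreP.
by apply/bigcapP => M MS; apply/morphpreP; split => //; exact: h.
Qed.

End Quo.
Unset Implicit Arguments. Set Strict Implicit. Set Printing Implicit Defensive.

Theorem mainTheorem6 (gT : finGroupType) (G N : {group gT}) :
  weakly_minmax G -> N <| G -> maxint G N -> weakly_minmax (G / N).
Proof.
move=> [_ hMax] nNG mN.
have key : forall C, unrefinable (G / N) C -> chain_length C = alpha (G / N).
  move=> C uC; apply/eqP; rewrite eqn_leq; apply/andP; split; last first.
    exact: (alpha_le (A := (G / N)%G) uC).
  have [S0 hS0 aS0] := alpha_attain (G / N)%G.
  case/andP: hS0 => /forall_inP mS0 /eqP eS0.
  pose C' := (fun X => coset N @*^-1 X) @: C.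
  have chC' : Mchain G C'.
    rewrite /Mchain; apply/andP; split.
      apply/subsetP => X /imsetP [Y YC ->]; apply: pre_Mposet => //.
      exact: (subsetP (unref_sub uC) Y YC).
    apply/forall_inP => X /imsetP [Y YC ->]; apply/forall_inP => K /imsetP [Z ZC ->].
    case/orP: (unref_chain uC YC ZC) => h; apply/orP; [left|right]; exact: morphpreS.
  have [E mE sCE] := maxset_exists chC'.
  have uE := maxset_unref mE.
  have NC' : gval N \in C'.
    apply/imsetP; exists 'Phi(G / N); first exact: (unref_Phi (A := (G / N)%G) uC).
    by rewrite prePhi.
  have NE : gval N \in E := subsetP sCE _ NC'.
  have [L [mL eL cL]] := chain_family uE NE.
  pose S' := (fun X => coset N @*^-1 X) @: S0.
  have ha : alpha G <= #|S' :|: L|.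
    apply: bigminn_le; apply/andP; split.
      apply/forall_inP => M; rewrite inE => /orP [/imsetP [K KS ->]|ML].
        by apply: pre_maximal => //; exact: mS0.
      exact: (forall_inP mL).
    rewrite bigcap_setU setIA big_imset /=; last by move=> ? ? _ _; exact: pre_inj.
    by rewrite preGcap // eS0 prePhi // eL eqxx.
  have hE : #|E|.-1 <= alpha G.
    rewrite -hMax; exact: (@leq_bigmax_cond _ (fun C => unrefinable G C) (fun C => chain_length C) E uE).
  have hU := cardsUI S' L.
  have hS' : #|S'| <= #|S0| := leq_imset_card _ _.
  have cC' : #|C'| = #|C| by apply: card_imset; exact: pre_inj.
  pose El := [set X in E | X \subset N].
  have hCU := cardsUI C' El.
  have hI : #|C' :&: El| <= 1.
    rewrite -(cards1 (gval N)); apply: subset_leq_card; apply/subsetP => X.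
    rewrite !inE => /andP [/imsetP [Y YC ->] /andP [_ sYN]].
    rewrite eqEsubset sYN /=; rewrite -{1}(prePhi nNG mN); apply: morphpreS.
    exact: (Mposet_Phi (A := (G / N)%G) (subsetP (unref_sub uC) _ YC)).
  have hUE : #|C' :|: El| <= #|E|.
    apply: subset_leq_card; rewrite subUset sCE /=.
    by apply/subsetP => X; rewrite inE => /andP [].
  have hEl : 0 < #|El| by apply/card_gt0P; exists (gval N); rewrite inE NE subxx.
  rewrite aS0 /chain_length -cC'.
  exact: (arith2 hE ha hU hS' cL hCU hI hUE hEl).
have [C0 uC0] := unref_exists (G / N)%G.
split.
  apply: (bigminn_const uC0 key).
  rewrite -(key _ uC0) /chain_length; exact: leq_trans (leq_pred _) (max_card _).
exact: (bigmax_const uC0 key).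
Qed.
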